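(* Let $T$ be a TCD map on a BTB graph $G$, and let $\tilde T$ be obtained from $T$ by a resplit at $w_0$, with notation $w_0,w_1,w_2,w_3,w_4,\tilde w_0$ as in the context. Then $$\mathrm{mr}\bigl(T(w_1),T(w_0),T(w_2),T(w_3),\tilde T(\tilde w_0),T(w_4)\bigr)=-1.$$
   Context: A BTB graph is a planar bipartite graph (black $B$, white $W$) in a disk or cactus with all black vertices of degree $3$. A TCD map is $T:W\to\mathbb{CP}^d$ such that the neighbours of each black vertex have pairwise distinct collinear images. Resplit. Let $w_0$ be an internal white vertex of degree $2$ with black neighbours $b$ (other neighbours $w_1,w_2$) and $b'$ (other neighbours $w_3,w_4$), labelled so that $w_1,w_4$ lie on one face containing $b,w_0,b'$ and $w_2,w_3$ on the other. The resplit replaces $w_0,b,b'$ by a white vertex $\tilde w_0$ and black vertices adjacent to $\{\tilde w_0,w_1,w_4\}$ and $\{\tilde w_0,w_2,w_3\}$. Choose lifts $V(w)$ of the points and write the collinearity relations as $V(w_0)=\alpha_1V(w_1)+\alpha_2V(w_2)=\alpha_3V(w_3)+\alpha_4V(w_4)$. Then $\tilde T(\tilde w_0)=[\alpha_1V(w_1)-\alpha_4V(w_4)]=[\alpha_3V(w_3)-\alpha_2V(w_2)]$, and all other points are unchanged. The move is assumed defined, i.e. $T(w_1)\ne T(w_4)$ and $T(w_2)\ne T(w_3)$. Multi-ratio: for points $P_1,P_{1,2},P_2,P_{2,3},P_3,P_{3,1}$ with $P_{i,i+1}$ on line $P_iP_{i+1}$, $\mathrm{mr}=\prod_{i=1}^3(P_i-P_{i,i+1})/(P_{i,i+1}-P_{i+1})$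 (indices mod $3$), computed in any affine chart containing all points. *)

(* Defs.v *)
From HB Require Import structures.
From mathcomp Require Import all_boot all_order all_algebra.
From mathcomp Require Import reals.
From mathcomp.real_closed Require Import complex.
Set Implicit Arguments. Unset Strict Implicit. Unset Printing Implicit Defensive.
Import Order.TTheory GRing.Theory Num.Theory.
Local Open Scope ring_scope.

Section Defs.
Variable F : fieldType.
Variable n : nat.

(* Points of the projective space P(F^n) are represented by nonzero lifts
   u : 'rV[F]_n.  Two lifts represent distinct projective points iff they
   are linearly independent. *)
Definition proj_neq (u v : 'rV[F]_n) : bool := \rank (col_mx u v) == 2%N.

(* An affine chart is the complement of the hyperplane {phi = 0}, phi a
   nonzero linear form given by the column vector f. *)
Definition lform (f : 'cV[F]_n) (u : 'rV[F]_n) : F := (u *m f) 0 0.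
Definition in_chart (f : 'cV[F]_n) (u : 'rV[F]_n) : bool := lform f u != 0.
Definition aff (f : 'cV[F]_n) (u : 'rV[F]_n) : 'rV[F]_n := (lform f u)^-1 *: u.

(* The ratio (a - b)/(b - c) of three collinear affine points with b != c:
   the scalar lambda with a - b = lambda (b - c), read off in any coordinate
   where b - c is nonzero. *)
Definition aratio (a b c : 'rV[F]_n) : F :=
  if [pick i | b 0 i != c 0 i] is Some i
  then (a 0 i - b 0 i) / (b 0 i - c 0 i) else 0.

Definition multiratio (f : 'cV[F]_n) (P1 P12 P2 P23 P3 P31 : 'rV[F]_n) : F :=
  aratio (aff f P1) (aff f P12) (aff f P2) *
  aratio (aff f P2) (aff f P23) (aff f P3) *
  aratio (aff f P3) (aff f P31) (aff f P1).
End Defs.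

(* Main.v *)
Require Import Defs.
From HB Require Import structures.
From mathcomp Require Import all_boot all_order all_algebra.
From mathcomp Require Import reals.
From mathcomp.real_closed Require Import complex.
From mathcomp Require Import ring.
Set Implicit Arguments. Unset Strict Implicit.
Import Order.TTheory GRing.Theory Num.Theory.
Local Open Scope ring_scope.

Lemma aratioE (F : fieldType) n (a b c : 'rV[F]_n) lam :
  (forall i, a 0 i - b 0 i = lam * (b 0 i - c 0 i)) ->
  (exists i, b 0 i != c 0 i) -> aratio a b c = lam.
Proof.
move=> H [j Hj]; rewrite /aratio; case: pickP => [i Hi|H0].
  have Hi' : b 0 i - c 0 i != 0 by rewrite subr_eq0.
  by rewrite H mulfK.
by move: (H0 j); rewrite Hj.
Qed.

Lemma rank_col_le1 (F : fieldType) n (v : 'rV[F]_n) k :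
  (\rank (col_mx (k *: v) v) <= 1)%N.
Proof.
apply: leq_trans (rank_leq_row v); apply: mxrankS.
by rewrite col_mx_sub scalemx_sub ?submx_refl.
Qed.

Lemma rank_col_le1' (F : fieldType) n (v : 'rV[F]_n) k :
  (\rank (col_mx v (k *: v)) <= 1)%N.
Proof.
apply: leq_trans (rank_leq_row v); apply: mxrankS.
by rewrite col_mx_sub scalemx_sub ?submx_refl.
Qed.

Lemma proj_neq_sc (F : fieldType) n (u v : 'rV[F]_n) s t :
  proj_neq u v -> s *: u = t *: v -> s = 0.
Proof.
rewrite /proj_neq => /eqP Hr E.
have [->//|sn0] := eqVneq s 0.
have Hu : u = (t / s) *: v by rewrite mulrC -scalerA -E scalerA mulVf ?scale1r.
by move: (rank_col_le1 v (t / s)); rewrite -Hu Hr.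
Qed.

Lemma proj_neq_sc' (F : fieldType) n (u v : 'rV[F]_n) s t :
  proj_neq u v -> s *: u = t *: v -> t = 0.
Proof.
rewrite /proj_neq => /eqP Hr E.
have [->//|tn0] := eqVneq t 0.
have Hv : v = (s / t) *: u by rewrite mulrC -scalerA E scalerA mulVf ?scale1r.
by move: (rank_col_le1' u (s / t)); rewrite -Hv Hr.
Qed.

Lemma lformD (F : fieldType) n (f : 'cV[F]_n) (u v : 'rV[F]_n) a b :
  lform f (a *: u + b *: v) = a * lform f u + b * lform f v.
Proof. by rewrite /lform mulmxDl -!scalemxAl !mxE. Qed.

Lemma lformB (F : fieldType) n (f : 'cV[F]_n) (u v : 'rV[F]_n) a b :
  lform f (a *: u - b *: v) = a * lform f u - b * lform f v.
Proof. by rewrite /lform mulmxBl -!scalemxAl !mxE. Qed.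

Lemma affE (F : fieldType) n (f : 'cV[F]_n) (u : 'rV[F]_n) i :
  aff f u 0 i = (lform f u)^-1 * u 0 i.
Proof. by rewrite /aff mxE. Qed.

Lemma neq_entry (F : fieldType) n (b c : 'rV[F]_n) : b != c -> exists i, b 0 i != c 0 i.
Proof.
move=> H; apply/existsP; rewrite -negb_forall; apply: contra H => /forallP Hf.
by apply/eqP/rowP => j; apply/eqP/Hf.
Qed.

(* Lifts V0..V4 in C^(d+1) of T(w0),...,T(w4), C = R[i]. *)
Theorem proposition5p5 (R : realType) (d : nat)
    (V0 V1 V2 V3 V4 : 'rV[R[i]]_d.+1) (a1 a2 a3 a4 : R[i]) :
  (* TCD conditions at b = {w0,w1,w2} and b' = {w0,w3,w4}:
     pairwise distinct images (the lifts are then nonzero) ... *)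
  proj_neq V0 V1 -> proj_neq V0 V2 -> proj_neq V1 V2 ->
  proj_neq V0 V3 -> proj_neq V0 V4 -> proj_neq V3 V4 ->
  (* ... and collinear, with the chosen relations *)
  V0 = a1 *: V1 + a2 *: V2 -> V0 = a3 *: V3 + a4 *: V4 ->
  (* the resplit is defined *)
  proj_neq V1 V4 -> proj_neq V2 V3 ->
  (* lift of tilde T(tilde w0) = [a1 V1 - a4 V4] *)
  let Vt := a1 *: V1 - a4 *: V4 in
  forall f : 'cV[R[i]]_d.+1,
    [/\ in_chart f V0, in_chart f V1, in_chart f V2 &
        [/\ in_chart f V3, in_chart f V4 & in_chart f Vt]] ->
    multiratio f V1 V0 V2 V3 Vt V4 = -1.
Proof.
move=> n01 n02 n12 n03 n04 n34 E1 E2 n14 n23 Vt f [c0 c1 c2 [c3 c4 ct]].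
rewrite /in_chart in c0 c1 c2 c3 c4 ct.
have a1n0 : a1 != 0.
  apply/eqP => a10; move: E1; rewrite a10 scale0r add0r -[V0]scale1r => E.
  by have := proj_neq_sc n02 E => /eqP; rewrite oner_eq0.
have a2n0 : a2 != 0.
  apply/eqP => a20; move: E1; rewrite a20 scale0r addr0 -[V0]scale1r => E.
  by have := proj_neq_sc n01 E => /eqP; rewrite oner_eq0.
have a4n0 : a4 != 0.
  apply/eqP => a40; move: E2; rewrite a40 scale0r addr0 -[V0]scale1r => E.
  by have := proj_neq_sc n03 E => /eqP; rewrite oner_eq0.
have h1 i : V0 0 i = a1 * V1 0 i + a2 * V2 0 i by rewrite E1 !mxE.
have h2 i : V0 0 i = a3 * V3 0 i + a4 * V4 0 i by rewrite E2 !mxE.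
have ht i : Vt 0 i = a1 * V1 0 i - a4 * V4 0 i by rewrite /Vt !mxE.
have ht' i : Vt 0 i = a3 * V3 0 i - a2 * V2 0 i.
  rewrite ht; have e := h2 i; rewrite h1 in e.
  have -> : a1 * V1 0 i = a3 * V3 0 i + a4 * V4 0 i - a2 * V2 0 i.
    by rewrite -e; ring.
  ring.
have Vt' : Vt = a3 *: V3 - a2 *: V2 by apply/rowP => i; rewrite ht' !mxE.
have l0E : lform f V0 = a1 * lform f V1 + a2 * lform f V2 by rewrite E1 lformD.
have ltE : lform f Vt = a1 * lform f V1 - a4 * lform f V4 by rewrite lformB.
have ltE' : lform f Vt = a3 * lform f V3 - a2 * lform f V2 by rewrite Vt' lformB.
set l0 := lform f V0 in c0 l0E *.
set l1 := lform f V1 in c1 l0E ltE *.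
set l2 := lform f V2 in c2 l0E ltE' *.
set l3 := lform f V3 in c3 ltE' *.
set l4 := lform f V4 in c4 ltE *.
set lt := lform f Vt in ct ltE ltE' *.
have c0' := c0; rewrite l0E in c0'.
have ct' := ct; rewrite ltE in ct'.
have ct'' := ct; rewrite ltE' in ct''.
rewrite /multiratio.
rewrite (@aratioE _ _ _ _ _ (a2 * l2 / (a1 * l1))); last first.
- apply: neq_entry; apply/eqP => E; rewrite /aff in E.
  by have /eqP := proj_neq_sc n02 E; rewrite invr_eq0 (negPf c0).
- move=> i; rewrite !affE -/l0 -/l1 -/l2 h1 l0E; field.
  by rewrite ?mulf_eq0 ?negb_or ?invr_eq0 ?c0' ?c1 ?c2 ?c3 ?c4 ?ct ?ct' ?ct'' ?a1n0 ?a2n0 ?a4n0.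
rewrite (@aratioE _ _ _ _ _ (lt / (a2 * l2))); last first.
- apply: neq_entry; apply/eqP => E; rewrite /aff -/l3 -/lt Vt' in E.
  have E' : (lt^-1 * a2) *: V2 = (lt^-1 * a3 - l3^-1) *: V3.
    apply/rowP => j; move/rowP: E => /(_ j); rewrite !mxE => e.
    rewrite mulrBl e; ring.
  by have /eqP := proj_neq_sc n23 E'; rewrite mulf_eq0 invr_eq0 (negPf ct) (negPf a2n0).
- move=> i; rewrite !affE -/l2 -/l3 -/lt ht' ltE'; field.
  by rewrite ?mulf_eq0 ?negb_or ?invr_eq0 ?c0' ?c1 ?c2 ?c3 ?c4 ?ct ?ct' ?ct'' ?a1n0 ?a2n0 ?a4n0.
rewrite (@aratioE _ _ _ _ _ (- (a1 * l1) / lt)); last first.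
- apply: neq_entry; apply/eqP => E; rewrite /aff -/l4 -/l1 in E.
  by have /eqP := proj_neq_sc' n14 (esym E); rewrite invr_eq0 (negPf c4).
- move=> i; rewrite !affE -/lt -/l4 -/l1 ht ltE; field.
  by rewrite ?mulf_eq0 ?negb_or ?invr_eq0 ?c0' ?c1 ?c2 ?c3 ?c4 ?ct ?ct' ?ct'' ?a1n0 ?a2n0 ?a4n0.
field.
by rewrite ?mulf_eq0 ?negb_or ?invr_eq0 ?c0' ?c1 ?c2 ?c3 ?c4 ?ct ?ct' ?ct'' ?a1n0 ?a2n0 ?a4n0.
Qed.
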